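(* Let $B_1,B_2\subset\mathbb{R}^m/\mathbb{Z}^m$ be balls. Let $\mathbf{q}_1,\mathbf{q}_2\in\mathbb{Z}^n\setminus\{\mathbf0\}$ be parallel and $\mathbf{r}_1,\mathbf{r}_2\in\mathbb{Z}^{n'}\setminus\{\mathbf0\}$ be parallel, with $|\mathbf{q}_i|=|\mathbf{r}_i|$ for $i=1,2$, and such that either both pairs point in the same direction or both pairs point in opposite directions (i.e. $\mathbf{q}_1\cdot\mathbf{q}_2$ and $\mathbf{r}_1\cdot\mathbf{r}_2$ have the same sign). Then \[ |A_{n,m}(\mathbf{q}_1,B_1)\cap A_{n,m}(\mathbf{q}_2,B_2)|=|A_{n',m}(\mathbf{r}_1,B_1)\cap A_{n',m}(\mathbf{r}_2,B_2)|. \]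
   Context: For $\mathbf{q}\in\mathbb{Z}^n$, $|\mathbf{q}|=\max_i|q_i|$. Balls are max-norm balls in $\mathbb{R}^m/\mathbb{Z}^m$ and $|\cdot|$ is Lebesgue measure. For $\mathbf{q}\in\mathbb{Z}^n$ and a ball $B$, $A_{n,m}(\mathbf{q},B)=\{\mathbf{x}\in[0,1]^{nm}:\mathbf{q}\mathbf{x}+\mathbf{p}\in B\text{ for some }\mathbf{p}\in\mathbb{Z}^m\}$, where $\mathbf{x}$ is an $n\times m$ matrix and $\mathbf{q}\mathbf{x}$ the row-vector–matrix product. *)

(* Defs.v *)
From HB Require Import structures.
From mathcomp Require Import all_boot all_order all_algebra.
From mathcomp Require Import all_classical all_reals all_analysis.
Set Implicit Arguments. Unset Strict Implicit. Unset Printing Implicit Defensive.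
Import Order.TTheory GRing.Theory Num.Theory.
Local Open Scope classical_set_scope.
Local Open Scope ring_scope.

Definition supnormZ (n : nat) (q : 'rV[int]_n) : int :=
  \big[Num.max/0]_(i < n) `|q 0 i|.

Definition dotZ (n : nat) (q r : 'rV[int]_n) : int :=
  \sum_(i < n) q 0 i * r 0 i.

Definition parallelZ (R : realType) (n : nat) (q1 q2 : 'rV[int]_n) : Prop :=
  exists lam : R, map_mx intr q2 = lam *: map_mx intr q1.

(* The (open) max-norm ball in R^m/Z^m of center c and radius rho, seen as a
   Z^m-periodic subset of R^m: y mod Z^m lies in it iff y + p is within
   max-distance rho of c for some p in Z^m. *)
Definition torus_ball (R : realType) (m : nat) (c : 'rV[R]_m) (rho : R)
  : set 'rV[R]_m :=
  [set y | exists p : 'rV[int]_m, forall j, `|y 0 j + (p 0 j)%:~R - c 0 j| < rho].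

Definition A_set (R : realType) (n m : nat) (q : 'rV[int]_n)
  (c : 'rV[R]_m) (rho : R) : set 'M[R]_(n, m) :=
  [set x : 'M[R]_(n, m) | (forall i j, 0 <= x i j <= 1) /\
     exists p : 'rV[int]_m, torus_ball c rho (map_mx intr q *m x + map_mx intr p)].

Fixpoint iter_int01 (R : realType) (I : eqType) (s : seq I)
    (f : (I -> R) -> \bar R) (x : I -> R) : \bar R :=
  match s with
  | [::] => f x
  | i :: s' => (\int[@lebesgue_measure R]_(t in `[0%R, 1%R])
                   iter_int01 s' f (fun k => if k == i then t else x k))%E
  end.

(* Lebesgue measure of a subset S of [0,1]^{n x m} (n x m real matrices),
   computed as the iterated integral of its indicator over the unit cube
   (equal to the Lebesgue measure for measurable S by Tonelli). *)
Definition vol01 (R : realType) (n m : nat) (S : set 'M[R]_(n, m)) : \bar R :=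
  iter_int01 (enum [the finType of ('I_n * 'I_m)%type])
    (fun x => ((\1_S (\matrix_(i, j) x (i, j)) : R)%:E)) (fun _ => 0).

(* Main.v *)
Require Import Defs.
From HB Require Import structures.
From mathcomp Require Import all_boot all_order all_algebra.
From mathcomp Require Import all_classical all_reals all_analysis measurable_realfun.
From mathcomp Require Import ring lra.
Import Order.TTheory GRing.Theory Num.Theory.
Local Open Scope classical_set_scope.
Local Open Scope ring_scope.

Section S.
Context (R : realType).
Definition aff (a b x : R) : R := a * x + b.
Lemma pre_pos a b x y : 0 < a -> aff a b @^-1` `]x,y]%classic = `](x-b)/a, (y-b)/a]%classic.
Proof.
move=> a0; rewrite eqEsubset; split => t; rewrite /= !in_itv /= /aff.
  move=> /andP[h1 h2]; rewrite ltr_pdivrMr // ler_pdivlMr //; apply/andP; split; lra.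
rewrite ltr_pdivrMr // ler_pdivlMr // => /andP[h1 h2]; apply/andP; split; lra.
Qed.
Lemma pre_neg a b x y : a < 0 -> aff a b @^-1` `]x,y]%classic = `[(y-b)/a, (x-b)/a[%classic.
Proof.
move=> a0; rewrite eqEsubset; split => t; rewrite /= !in_itv /= /aff.
  move=> /andP[h1 h2]; rewrite ltr_ndivlMr // ler_ndivrMr //; apply/andP; split; lra.
rewrite ltr_ndivlMr // ler_ndivrMr // => /andP[h1 h2]; apply/andP; split; lra.
Qed.
Local Notation mu := (@lebesgue_measure R).
Lemma maff a b : measurable_fun [set: R] (aff a b).
Proof. rewrite /aff. by apply: measurable_realfun.measurable_funD. Qed.
Lemma push_aff (a b : R) : a != 0 -> forall A, measurable A ->
  mu A = (`|a|%:E * mu (aff a b @^-1` A))%E.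
Proof.
move=> a0.
unshelve epose proof (@lebesgue_measure_unique R (mscale (NngNum (normr_ge0 a)) (pushforward mu (aff a b : _ -> measurableTypeR R)))) as H.
  exact: maff.
apply: H.
move=> _ [[x y] _ <-] /=.
rewrite /mscale /pushforward /=.
have [ap|an] := ltrP 0 a.
  rewrite /pushforward pre_pos // !lebesgue_measure_itv /=.
  rewrite !lte_fin ltr_pM2r ?invr_gt0 // ltrD2r.
  case: ifP => _; last by rewrite mule0.
  rewrite gtr0_norm // -!EFinD -EFinM; congr EFin; field; exact: lt0r_neq0.
have {an}an : a < 0 by rewrite lt_neqAle a0 an.
rewrite /pushforward pre_neg // !lebesgue_measure_itv /=.
rewrite !lte_fin ltr_nM2r ?invr_lt0 // ltrD2r.
case: ifP => _; last by rewrite mule0.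
rewrite ltr0_norm // -!EFinD -EFinM; congr EFin; field; exact: ltr0_neq0.
Qed.
Lemma maff' (a b : R) : measurable_fun [set: measurableTypeR R] (aff a b : measurableTypeR R -> measurableTypeR R).
Proof. exact: maff. Qed.
Lemma int_aff (a b : R) (a0 : a != 0) (D : set R) (mD : measurable D) (f : R -> \bar R)
  (mf : measurable_fun D f) (f0 : forall y, D y -> (0 <= f y)%E) :
  (\int[mu]_(x in aff a b @^-1` D) f (aff a b x) = (`|a|^-1)%:E * \int[mu]_(y in D) f y)%E.
Proof.
have := @ge0_integral_pushforward _ _ (measurableTypeR R) (measurableTypeR R) R (aff a b) (maff' a b) mu D f mD mf.
move=> <-; last by move=> y /set_mem; exact: f0.
have na : 0 <= `|a|^-1 by rewrite invr_ge0.
rewrite -(ge0_integral_mscale mu mD (NngNum na) mf f0).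
apply: eq_measure_integral; first exact: maff'. move=> mm A mA _.
by rewrite /= /mscale /pushforward /= (push_aff a b a0 _ mA) muleA -EFinM mulVf ?normr_eq0 // mul1e.
Qed.
Lemma co_split (x y z : R) : x <= y -> y <= z ->
  `[x,z[%classic = `[x,y[%classic `|` `[y,z[%classic.
Proof.
move=> xy yz; rewrite eqEsubset; split => t /=; rewrite !in_itv /=.
  move=> /andP[h1 h2]; have [ty|yt] := ltrP t y.
    by left; rewrite h1.
  by right; rewrite h2.
by case => /andP[h1 h2]; apply/andP; split; lra.
Qed.
Lemma co_disj (x y z : R) : [disjoint `[x,y[%classic & `[y,z[%classic].
Proof.
apply/disj_setPS => t [] /=; rewrite !in_itv /= => /andP[h1 h2] /andP[h3 h4]; lra.
Qed.
Lemma pre_tr b c d : aff 1 b @^-1` `[c,d[%classic = `[c-b,d-b[%classic.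
Proof.
rewrite eqEsubset; split => t; rewrite /= !in_itv /= /aff mul1r => /andP[h1 h2];
  apply/andP; split; lra.
Qed.

Variable f : R -> \bar R.
Hypothesis mf : measurable_fun setT f.
Hypothesis f0 : forall y, (0 <= f y)%E.
Hypothesis fper : forall y, f (y + 1) = f y.

Lemma mfS (D : set R) : measurable_fun D f.
Proof. exact: measurable_funS mf. Qed.

Lemma fper_nat (n : nat) y : f (y + n%:R) = f y.
Proof. elim: n y => [|n IH] y; first by rewrite addr0. by rewrite -natr1 addrA fper IH. Qed.

Lemma fper_int (k : int) y : f (y + k%:~R) = f y.
Proof.
case: k => n; first exact: fper_nat.
rewrite NegzE mulrNz -[in RHS](subrK (n.+1%:R) y) fper_nat. done.
Qed.

Lemma int_tr (b c d : R) : (\int[mu]_(x in `[(c-b)%R,(d-b)%R[) f (x + b)%R = \int[mu]_(x in `[c,d[) f x)%E.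
Proof.
have := int_aff 1 b (oner_neq0 R) _ (measurable_itv `[c,d[) f (mfS _) (fun y _ => f0 y).
rewrite pre_tr normr1 invr1 mul1e => <-.
by apply: eq_integral => x _; rewrite /aff mul1r.
Qed.

Lemma int_per (s : R) : (\int[mu]_(x in `[s,(s+1)%R[) f x = \int[mu]_(x in `[0%R,1%R[) f x)%E.
Proof.
have [h1 h2] : (Num.floor s)%:~R <= s /\ s < (Num.floor s)%:~R + 1.
  by split; [exact: floor_le | rewrite -intrD1; exact: floorD1_gt].
set k : R := (Num.floor s)%:~R in h1 h2.
rewrite -(int_tr k).
under eq_integral do rewrite (fper_int (Num.floor s)).
rewrite (@co_split _ 1); [|lra|lra].
rewrite ge0_integral_setU //; try exact: mfS; try (by move=> *; exact: f0); try exact: co_disj.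
rewrite -(int_tr 1 1).
have -> : (\int[mu]_(x in `[(1 - 1)%R, (s + 1 - k - 1)%R[) f (x + 1)%R)%E = (\int[mu]_(x in `[0%R, (s-k)%R[) f x)%E.
  have -> : (1 - 1 = 0 :> R) by rewrite subrr.
  have -> : s + 1 - k - 1 = s - k :> R by ring.
  by apply: eq_integral => x _; rewrite fper.
rewrite addeC -ge0_integral_setU //; try exact: mfS; try (by move=> *; exact: f0); try exact: co_disj.
by rewrite -co_split //; lra.
Qed.
Lemma int_perN (N : nat) (s : R) :
  (\int[mu]_(x in `[s,(s+N%:R)%R[) f x = N%:R%:E * \int[mu]_(x in `[0%R,1%R[) f x)%E.
Proof.
elim: N => [|N IH].
  have -> : `[s, (s + 0%:R)%R[%classic = set0 :> set R.
    by rewrite eqEsubset; split => t //=; rewrite in_itv /= => /andP[h1 h2]; lra.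
  by rewrite integral_set0 mul0e.
have hN := ler0n R N.
rewrite (@co_split _ (s + N%:R)); [|lra|]; last by rewrite -natr1; lra.
rewrite ge0_integral_setU //; try exact: mfS; try (by move=> *; exact: f0); try exact: co_disj.
rewrite IH -natr1 -(int_per (s + N%:R)).
have -> : s + N%:R + 1 = s + (N%:R + 1) :> R by ring.
rewrite EFinD ge0_muleDl // mul1e. done.
Qed.

Lemma pre_co_pos (al be : R) : 0 < al ->
  aff al be @^-1` `[be, (be + al)%R[%classic = `[0%R, 1%R[%classic.
Proof.
move=> a0; rewrite eqEsubset; split => t; rewrite /= !in_itv /= /aff.
  move=> /andP[h1 h2]; apply/andP; split.
    by rewrite -(pmulr_rge0 _ a0); lra.
  by rewrite -(ltr_pM2l a0) mulr1; lra.
move=> /andP[h1 h2]; apply/andP; split.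
  by have := mulr_ge0 (ltW a0) h1; lra.
by have := h2; rewrite -(ltr_pM2l a0) mulr1; lra.
Qed.
Lemma pre_oc_neg (al be : R) : al < 0 ->
  aff al be @^-1` `](be + al)%R, be]%classic = `[0%R, 1%R[%classic.
Proof.
move=> a0; rewrite eqEsubset; split => t; rewrite /= !in_itv /= /aff.
  move=> /andP[h1 h2]; apply/andP; split.
    by rewrite -(nmulr_rle0 _ a0); lra.
  by rewrite -(ltr_nM2l a0) mulr1; lra.
move=> /andP[h1 h2]; apply/andP; split.
  have : al * 1 < al * t by rewrite ltr_nM2l.
  lra.
have : al * t <= 0 by rewrite nmulr_rle0.
lra.
Qed.

Lemma per_main (k : int) (a : R) : k != 0 ->
  (\int[mu]_(t in `[0%R, 1%R]) f (k%:~R * t + a)%R = \int[mu]_(x in `[0%R,1%R[) f x)%E.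
Proof.
move=> k0.
have mc : measurable_fun setT (fun t : R => f (k%:~R * t + a)%R).
  exact: (measurableT_comp mf (maff _ _)).
rewrite -integral_itv_bndo_bndc; last exact: measurable_funS mc.
have kR0 : k%:~R != 0 :> R by rewrite intr_eq0.
have [kp|kn] := ltrP 0 k.
  have kRp : 0 < k%:~R :> R by rewrite ltr0z.
  rewrite -[in LHS](pre_co_pos _ a kRp).
  rewrite (int_aff _ _ kR0 _ (measurable_itv _) _ (mfS _) (fun y _ => f0 y)).
  have -> : k%:~R = (`|k|%N)%:R :> R by rewrite -[in LHS](gtz0_abs kp).
  rewrite int_perN muleA -EFinM gtr0_norm ?ltr0n ?absz_gt0 // mulVf ?pnatr_eq0 ?absz_eq0 // mul1e.
  done.
have {kn}kn : k < 0 by rewrite lt_neqAle k0 kn.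
have kRn : k%:~R < 0 :> R by rewrite ltrz0.
rewrite -[in LHS](pre_oc_neg _ a kRn).
rewrite (int_aff _ _ kR0 _ (measurable_itv _) _ (mfS _) (fun y _ => f0 y)).
rewrite integral_itv_obnd_cbnd; last exact: mfS.
rewrite -integral_itv_bndo_bndc; last exact: mfS.
have hk : (`|k|%N)%:R = - k%:~R :> R.
  by rewrite natr_absz ler0_norm ?intrN // ltW.
have E : (a + k%:~R) + (`|k|%N)%:R = a :> R by rewrite hk; ring.
have := int_perN (`|k|%N) (a + k%:~R); rewrite E => ->.
have -> : `|k%:~R| = (`|k|%N)%:R :> R by rewrite natr_absz intr_norm.
rewrite muleA -EFinM mulVf ?pnatr_eq0 ?absz_eq0 // mul1e.
done.
Qed.
End S.

Section Iter.
Context (R : realType) (n m : nat).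
Local Notation mu := (@lebesgue_measure R).
Variable e : 'I_n -> int.
Variable hh : 'I_m -> R -> R.
Hypothesis hm : forall j, measurable_fun setT (fun y => (hh j y)%:E).
Hypothesis h0 : forall j y, 0 <= hh j y.
Hypothesis hper : forall j y, hh j (y + 1) = hh j y.
Definition lin (x : 'I_n * 'I_m -> R) (j : 'I_m) : R := \sum_(i < n) (e i)%:~R * x (i, j).
Definition V j := (\int[mu]_(t in `[0%R,1%R[) (hh j t)%:E)%E.
Definition hasj (s : seq ('I_n * 'I_m)) j := has (fun k : 'I_n * 'I_m => (k.2 == j) && (e k.1 != 0)) s.
Definition Phi s x j := if hasj s j then V j else (hh j (lin x j))%:E.
Definition cube (x : 'I_n * 'I_m -> R) := forall k, 0 <= x k <= 1.
Definition upd (x : 'I_n * 'I_m -> R) v (t : R) := fun k => if k == v then t else x k.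

Variable G : ('I_n * 'I_m -> R) -> \bar R.
Hypothesis hG : forall x, cube x -> G x = (\prod_(j < m) (hh j (lin x j))%:E)%E.

Lemma V_ge0 j : (0 <= V j)%E.
Proof. by apply: integral_ge0 => t _; rewrite lee_fin. Qed.

Lemma Phi_ge0 s x j : (0 <= Phi s x j)%E.
Proof. by rewrite /Phi; case: ifP => _; [exact: V_ge0 | rewrite lee_fin]. Qed.

Lemma iter_Phi s x : cube x -> iter_int01 s G x = (\prod_(j < m) Phi s x j)%E.
Proof.
elim: s x => [|v s IH] x cx /=.
  by rewrite hG //; apply: eq_bigr => j _; rewrite /Phi /hasj /=.
transitivity (\int[mu]_(t in `[0%R,1%R]) (\prod_(j < m) Phi s (upd x v t) j))%E.
  apply: eq_integral => t /set_mem; rewrite /= in_itv /= => ht; rewrite IH //.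
  by move=> k; rewrite /upd; case: ifP => _.
case: v => i j0.
have Hother : forall t j, j != j0 -> Phi s (upd x (i,j0) t) j = Phi s x j.
  move=> t j jj0; rewrite /Phi; case: ifP => // _; congr (_%:E); congr (hh j _).
  apply: eq_bigr => i' _; rewrite /upd.
  by rewrite xpair_eqE (negbTE jj0) andbF.
have Hv : forall j, j != j0 -> Phi ((i,j0)::s) x j = Phi s x j.
  by move=> j jj0; rewrite /Phi /hasj /= eq_sym (negbTE jj0).
rewrite [RHS](bigD1 j0) //=.
set C := (\big[*%E/1%E]_(j < m | j != j0) Phi ((i,j0)::s) x j)%E.
have C0 : (0 <= C)%E by apply: prode_ge0 => j _; exact: Phi_ge0.
have HC : forall t, (\big[*%E/1%E]_(j < m | j != j0) Phi s (upd x (i,j0) t) j)%E = C.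
  by move=> t; apply: eq_bigr => j jj0; rewrite Hother // Hv.
under eq_integral do rewrite (bigD1 j0) //= HC.
set a := \sum_(i' < n | i' != i) (e i')%:~R * x (i', j0).
have Hlin : forall t, lin (upd x (i,j0) t) j0 = (e i)%:~R * t + a.
  move=> t; rewrite /lin (bigD1 i) //= /upd eqxx; congr (_ + _).
  by apply: eq_bigr => i' ii; rewrite xpair_eqE (negbTE ii).
have Hlinx : lin x j0 = (e i)%:~R * x (i, j0) + a.
  by rewrite /lin (bigD1 i).
have mu01 : mu `[0%R, 1%R] = 1%E.
  by rewrite lebesgue_measure_itv /= lte_fin ltr01 -EFinD subr0.
have [Hc|Hc] := boolP (hasj s j0 || (e i == 0)).
  have Hk : forall t, Phi s (upd x (i,j0) t) j0 = Phi ((i,j0)::s) x j0.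
    move=> t; rewrite /Phi /hasj /=.
    case/orP: Hc => [hs|ei0].
      by rewrite /hasj in hs; rewrite hs orbT.
    rewrite eqxx /= ei0 /=; case: ifP => // _.
    by rewrite Hlin Hlinx (eqP ei0) !mul0r.
  under eq_integral do rewrite Hk.
  by rewrite integral_cst //= mu01 mule1.
rewrite negb_or in Hc; case/andP: Hc => hs ei.
have Hk : forall t, Phi s (upd x (i,j0) t) j0 = (hh j0 ((e i)%:~R * t + a))%:E.
  by move=> t; rewrite /Phi (negbTE hs) Hlin.
have HV : Phi ((i,j0)::s) x j0 = V j0.
  by rewrite /Phi /hasj /= eqxx ei.
under eq_integral do rewrite Hk.
rewrite HV ge0_integralZr //.
- congr (_ * _)%E.
  have := @per_main R (fun y => (hh j0 y)%:E) (hm j0) (fun y => ltac:(rewrite lee_fin; exact: h0)) (fun y => congr1 EFin (hper j0 y)) (e i) a ei.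
  by [].
- apply: (measurable_funS (E:=setT)) => //. have H := measurableT_comp (hm j0) (@maff R (e i)%:~R a). exact H.
- by move=> t _; rewrite lee_fin.
Qed.

Lemma iter_all : (exists i, e i != 0) ->
  iter_int01 (enum [the finType of ('I_n * 'I_m)%type]) G (fun _ => 0) = (\prod_(j < m) V j)%E.
Proof.
move=> [i0 ei0]; rewrite iter_Phi; last by move=> k; rewrite lexx ler01.
apply: eq_bigr => j _; rewrite /Phi.
have -> : hasj (enum [the finType of ('I_n * 'I_m)%type]) j by apply/hasP; exists (i0, j); rewrite ?mem_enum //= eqxx.
done.
Qed.
End Iter.

Module P3m.
Import numFieldNormedType.Exports.
Section Char.
Context (R : realType).
Definition Qset (w : int) (a r : R) : set R :=
  [set y : R | exists z : int, `|w%:~R * y + z%:~R - a| < r].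
Definition Pset (w u : int) (a b r1 r2 : R) : set R := Qset w a r1 `&` Qset u b r2.
Definition hfun w u a b r1 r2 (y : R) : R := \1_(Pset w u a b r1 r2) y.

Lemma openQ (w : int) (a r : R) : open (Qset w a r).
Proof.
have -> : Qset w a r =
  \bigcup_(z in [set: int]) ((fun y : R => `|w%:~R * y + z%:~R - a|) @^-1` [set t | t < r]).
  by rewrite eqEsubset; split => y /= [z hz]; [exists z | exists z].
apply: bigcup_open => z _; apply: open_comp; last exact: open_lt.
move=> y _.
apply: cvg_norm.
apply: cvgB; last exact: cvg_cst.
apply: cvgD; last exact: cvg_cst.
apply: cvgMr; exact: cvg_id.
Qed.

Lemma hfun_meas w u a b r1 r2 : measurable_fun setT (fun y => (hfun w u a b r1 r2 y)%:E).
Proof.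
apply/measurable_EFinP; apply: measurable_indic.
apply: open_measurable; apply: openI; exact: openQ.
Qed.

Lemma hfun_ge0 w u a b r1 r2 y : 0 <= hfun w u a b r1 r2 y.
Proof. by rewrite /hfun indicE. Qed.

Lemma Qper w a r y : Qset w a r (y + 1) <-> Qset w a r y.
Proof.
split => [[z hz]|[z hz]].
  by exists (z + w); rewrite intrD; move: hz; congr (`|_| < _); ring.
by exists (z - w); rewrite intrB; move: hz; congr (`|_| < _); ring.
Qed.

Lemma hfun_per w u a b r1 r2 y : hfun w u a b r1 r2 (y + 1) = hfun w u a b r1 r2 y.
Proof.
have E : Pset w u a b r1 r2 (y + 1) <-> Pset w u a b r1 r2 y.
  by rewrite /Pset /=; split => -[h1 h2]; split; apply/Qper.
rewrite /hfun !indicE.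
have [H|H] := pselect (Pset w u a b r1 r2 y).
  by rewrite !mem_set //; apply/E.
by rewrite !memNset // => /E.
Qed.
End Char.

Section Char2.
Context (R : realType) (n m : nat).

Lemma Aset_iff (q : 'rV[int]_n) (c : 'rV[R]_m) rho (M : 'M[R]_(n,m)) :
  A_set q c rho M <-> (forall i j, 0 <= M i j <= 1) /\
    forall j, exists z : int, `|\sum_i (q 0 i)%:~R * M i j + z%:~R - c 0 j| < rho.
Proof.
split.
  move=> [cube [p [p' H]]]; split => // j; exists (p 0 j + p' 0 j).
  have := H j; rewrite !mxE.
  under eq_bigr do rewrite mxE.
  by rewrite intrD addrA.
move=> [cube H]; split => //.
have [zf hz] := choice H.
exists 0; exists (\row_j zf j) => j.
rewrite !mxE.
under eq_bigr do rewrite mxE.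
by rewrite addr0; exact: hz.
Qed.

Lemma ind_prod (w u : int) (e : 'I_n -> int) (q1 q2 : 'rV[int]_n) (c1 c2 : 'rV[R]_m) r1 r2
  (hq1 : forall i, q1 0 i = w * e i) (hq2 : forall i, q2 0 i = u * e i)
  (x : 'I_n * 'I_m -> R) : cube R n m x ->
  (\1_(A_set q1 c1 r1 `&` A_set q2 c2 r2) (\matrix_(i, j) x (i, j)) : R)%:E
   = (\prod_(j < m) (hfun R w u (c1 0 j) (c2 0 j) r1 r2 (lin R n m e x j))%:E)%E.
Proof.
move=> cx; rewrite prodEFin; congr EFin.
set M := \matrix_(i, j) x (i, j).
have cM : forall i j, 0 <= M i j <= 1 by move=> i j; rewrite mxE; exact: cx.
have S1 : forall j, \sum_i (q1 0 i)%:~R * M i j = w%:~R * lin R n m e x j.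
  move=> j; rewrite /lin mulr_sumr; apply: eq_bigr => i _.
  by rewrite mxE hq1 intrM mulrA.
have S2 : forall j, \sum_i (q2 0 i)%:~R * M i j = u%:~R * lin R n m e x j.
  move=> j; rewrite /lin mulr_sumr; apply: eq_bigr => i _.
  by rewrite mxE hq2 intrM mulrA.
have HP : (A_set q1 c1 r1 `&` A_set q2 c2 r2) M <->
    forall j, Pset R w u (c1 0 j) (c2 0 j) r1 r2 (lin R n m e x j).
  split.
    move=> [/Aset_iff [_ H1] /Aset_iff [_ H2]] j; split.
      by have [z hz] := H1 j; exists z; rewrite -S1.
    by have [z hz] := H2 j; exists z; rewrite -S2.
  move=> H; split; apply/Aset_iff; split => // j.
    by have [[z hz] _] := H j; exists z; rewrite S1.
  by have [_ [z hz]] := H j; exists z; rewrite S2.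
rewrite indicE.
have [HA|HA] := pselect ((A_set q1 c1 r1 `&` A_set q2 c2 r2) M).
  rewrite mem_set //; apply/esym/big1 => j _.
  by rewrite /hfun indicE mem_set //; apply: (proj1 HP HA).
rewrite memNset //.
have /existsNP [j Hj] : ~ (forall j, Pset R w u (c1 0 j) (c2 0 j) r1 r2 (lin R n m e x j)).
  by move=> H; apply: HA; apply/HP.
by rewrite (bigD1 j) //= /hfun indicE memNset // mul0r.
Qed.

Lemma vol_formula (w u : int) (e : 'I_n -> int) (q1 q2 : 'rV[int]_n) (c1 c2 : 'rV[R]_m) r1 r2
  (hq1 : forall i, q1 0 i = w * e i) (hq2 : forall i, q2 0 i = u * e i) :
  (exists i, e i != 0) ->
  vol01 (A_set q1 c1 r1 `&` A_set q2 c2 r2)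
  = (\prod_(j < m) V R m (fun j => hfun R w u (c1 0 j) (c2 0 j) r1 r2)%R j)%E.
Proof.
move=> he; rewrite /vol01.
apply: (iter_all R n m e) => //.
- by move=> j; exact: hfun_meas.
- by move=> j y; exact: hfun_per.
- by move=> x cx; exact: ind_prod.
Qed.
End Char2.

End P3m.
Import P3m.

Lemma exists_nz (n : nat) (q : 'rV[int]_n) : q != 0 -> exists i, q 0 i != 0.
Proof.
move=> qn; have [i Hi|H] := pickP (fun i => q 0 i != 0); first by exists i.
exfalso; move/eqP: qn; apply; apply/matrixP => a b; rewrite (ord1 a) mxE.
by have := H b; move/negbFE/eqP.
Qed.

Lemma decomp (R : realType) n (q1 q2 : 'rV[int]_n) : q1 != 0 -> parallelZ R q1 q2 ->
  exists (rr : rat) (e : 'I_n -> int), (forall i, q1 0 i = denq rr * e i) /\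
    (forall i, q2 0 i = numq rr * e i) /\ (exists i, e i != 0).
Proof.
move=> /exists_nz [i0 hi0] [lam hlam].
have hq : forall i, (q2 0 i)%:~R = lam * (q1 0 i)%:~R :> R.
  by move=> i; move/matrixP: hlam => /(_ 0 i); rewrite !mxE.
have cross : forall i, q2 0 i * q1 0 i0 = q1 0 i * q2 0 i0.
  move=> i; apply: (@intr_inj R); rewrite !intrM !hq; ring.
set rr : rat := (q2 0 i0)%:~R / (q1 0 i0)%:~R.
set d := denq rr; set nn := numq rr.
have d0 : d != 0 by rewrite gt_eqF ?denq_gt0.
have hrr : q2 0 i0 * d = nn * q1 0 i0.
  have := divq_num_den rr; rewrite {2}/rr => /eqP.
  rewrite eqr_div ?intr_eq0 // => /eqP H.
  by apply: (@intr_inj rat); rewrite !intrM -H mulrC.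
have key : forall i, q2 0 i * d = nn * q1 0 i.
  move=> i; apply: (mulIf hi0).
  transitivity ((q2 0 i * q1 0 i0) * d); first ring.
  rewrite cross.
  transitivity (q1 0 i * (q2 0 i0 * d)); first ring.
  rewrite hrr; ring.
have cop : coprimez d nn by rewrite coprimezE coprime_sym coprime_num_den.
have dv : forall i, (d %| q1 0%R i)%Z.
  move=> i; rewrite -(Gauss_dvdzr _ cop) -key; exact: dvdz_mull (dvdzz _).
exists rr, (fun i => divz (q1 0 i) d); split; [|split].
- by move=> i; rewrite mulrC divzK.
- move=> i; apply: (mulIf d0); rewrite key -mulrA divzK //.
- exists i0; apply: contra hi0 => /eqP h.
  by rewrite -(divzK (dv i0)) h mul0r.
Qed.


Lemma supnorm_scale n (q : 'rV[int]_n) (k : int) (e : 'I_n -> int) :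
  (forall i, q 0 i = k * e i) -> supnormZ q = `|k| * \big[Num.max/0]_(i < n) `|e i|.
Proof.
move=> hq; rewrite /supnormZ.
under eq_bigr do rewrite hq normrM.
elim/big_rec2: _ => [|i y1 y2 _ ->]; first by rewrite mulr0.
by rewrite maxr_pMr.
Qed.

Lemma supe_gt0 n (e : 'I_n -> int) i0 : e i0 != 0 -> 0 < \big[Num.max/0]_(i < n) `|e i|.
Proof.
move=> h; rewrite (bigD1 i0) //= lt_max; apply/orP; left; by rewrite normr_gt0.
Qed.

Lemma dot_scale n (q1 q2 : 'rV[int]_n) d nn (e : 'I_n -> int) :
  (forall i, q1 0 i = d * e i) -> (forall i, q2 0 i = nn * e i) ->
  dotZ q1 q2 = d * nn * \sum_(i < n) e i * e i.
Proof.
move=> h1 h2; rewrite /dotZ mulr_sumr; apply: eq_bigr => i _; rewrite h1 h2; ring.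
Qed.

Lemma sumsq_gt0 n (e : 'I_n -> int) i0 : e i0 != 0 -> 0 < \sum_(i < n) e i * e i.
Proof.
move=> h; rewrite (bigD1 i0) //=.
have h1 : 0 < e i0 * e i0 by rewrite lt_def mulf_neq0 //= -expr2 sqr_ge0.
have h2 : 0 <= \sum_(i < n | i != i0) e i * e i.
  by apply: sumr_ge0 => i _; rewrite -expr2 sqr_ge0.
lra.
Qed.

Theorem mainTheorem7 (R : realType) (n n' m : nat)
  (c1 c2 : 'rV[R]_m) (rho1 rho2 : R)
  (q1 q2 : 'rV[int]_n) (r1 r2 : 'rV[int]_n') :
  0 < rho1 -> 0 < rho2 ->
  q1 != 0 -> q2 != 0 -> r1 != 0 -> r2 != 0 ->
  parallelZ R q1 q2 -> parallelZ R r1 r2 ->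
  supnormZ q1 = supnormZ r1 -> supnormZ q2 = supnormZ r2 ->
  Num.sg (dotZ q1 q2) = Num.sg (dotZ r1 r2) ->
  vol01 (A_set q1 c1 rho1 `&` A_set q2 c2 rho2)
  = vol01 (A_set r1 c1 rho1 `&` A_set r2 c2 rho2).
Proof.
move=> _ _ q10 _ r10 _ pq pr hs1 hs2 hsg.
have [rr [e [he1 [he2 [i0 hi0]]]]] := @decomp R n q1 q2 q10 pq.
have [rr' [f [hf1 [hf2 [j0 hj0]]]]] := @decomp R n' r1 r2 r10 pr.
set E := \big[Num.max/0]_(i < n) `|e i|.
set F := \big[Num.max/0]_(i < n') `|f i|.
have E0 : 0 < E by exact: supe_gt0 _ _ _ hi0.
have F0 : 0 < F by exact: supe_gt0 _ _ _ hj0.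
have dp := denq_gt0 rr; have dp' := denq_gt0 rr'.
rewrite (supnorm_scale _ _ _ _ he1) (supnorm_scale _ _ _ _ hf1) !gtr0_norm // in hs1.
rewrite (supnorm_scale _ _ _ _ he2) (supnorm_scale _ _ _ _ hf2) in hs2.
rewrite (dot_scale _ _ _ _ _ _ he1 he2) (dot_scale _ _ _ _ _ _ hf1 hf2) !sgrM in hsg.
rewrite (gtr0_sg dp) (gtr0_sg dp') (gtr0_sg (sumsq_gt0 _ _ _ hi0)) (gtr0_sg (sumsq_gt0 _ _ _ hj0)) !mul1r !mulr1 in hsg.
have habs : `|numq rr| * denq rr' = `|numq rr'| * denq rr.
  apply: (mulIf (negbT (gt_eqF E0))).
  transitivity (denq rr' * (`|numq rr| * E)); first ring.
  rewrite hs2.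
  transitivity (`|numq rr'| * (denq rr' * F)); first ring.
  rewrite -hs1; ring.
have hcross : numq rr * denq rr' = numq rr' * denq rr.
  rewrite (numEsg (numq rr)) (numEsg (numq rr')) hsg -!mulrA habs //.
have hrr : rr = rr'.
  rewrite -(divq_num_den rr) -(divq_num_den rr'); apply/eqP.
  rewrite eqr_div; [|by rewrite intr_eq0 gt_eqF|by rewrite intr_eq0 gt_eqF].
  by rewrite -!intrM hcross.
subst rr'.
rewrite (@vol_formula R n m _ _ _ _ _ c1 c2 rho1 rho2 he1 he2); last by exists i0.
rewrite (@vol_formula R n' m _ _ _ _ _ c1 c2 rho1 rho2 hf1 hf2) //; by exists j0.
Qed.
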